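(* Let $Q \ll P$ be probability measures on a Polish space $\Omega$ with $r = dQ/dP$, and let $\epsilon \in (0,1]$. Let $Q'$ be any probability distribution on $\Omega$ such that $D_{TV}(Q', Q) \le \epsilon$. Then $\exp_2 D_\infty(Q'\|P) \ge S_P^{-1}(\epsilon)$.
   Context: Define $w_P(h) = \mathbb{P}_{X\sim P}[r(X) \ge h]$, $W_P(h) = \int_0^h w_P(\eta)\,d\eta$ and $S_P(h) = 1 - W_P(h)$. $S_P$ is strictly decreasing on $[0, \|r\|_\infty]$ with $S_P(0) = 1$, $S_P(\|r\|_\infty) = 0$, and $S_P^{-1} : [0,1] \to [0, \|r\|_\infty]$ denotes its inverse there ($\|\cdot\|_\infty$ is the $P$-essential supremum). $D_\infty(Q'\|P) = \log_2 \|dQ'/dP\|_\infty$ if $Q' \ll P$ and $+\infty$ otherwise; $\exp_2(x) = 2^x$. $D_{TV}(Q',Q) = \sup_B |Q'(B) - Q(B)|$. *)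

(* Defs.v *)
From HB Require Import structures.
From mathcomp Require Import all_boot all_order all_algebra.
From mathcomp Require Import all_classical all_reals all_analysis ess_sup_inf charge.
Set Implicit Arguments. Unset Strict Implicit. Unset Printing Implicit Defensive.
Import Order.TTheory GRing.Theory Num.Theory.
Import numFieldNormedType.Exports.
Local Open Scope classical_set_scope.
Local Open Scope ring_scope.
Local Open Scope ereal_scope.

Definition wP d (T : measurableType d) (R : realType)
  (P : probability T R) (r : T -> R) (h : R) : \bar R :=
  P [set x | (h <= r x)%R].

Definition WP d (T : measurableType d) (R : realType)
  (P : probability T R) (r : T -> R) (h : R) : \bar R :=
  \int[lebesgue_measure]_(eta in `[0%R, h]) wP P r eta.

Definition SP d (T : measurableType d) (R : realType)
  (P : probability T R) (r : T -> R) (h : R) : \bar R :=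
  1 - WP P r h.

Definition ess_norm d (T : measurableType d) (R : realType)
  (P : probability T R) (r : T -> R) : \bar R :=
  ess_sup P (EFin \o r).

Definition DTV d (T : measurableType d) (R : realType)
  (Q' Q : probability T R) : \bar R :=
  ereal_sup [set `|Q' B - Q B| | B in measurable].

(* exp_2 D_oo(Q'||P) = || dQ'/dP ||_oo (P-ess sup) if Q' << P, +oo otherwise *)
Definition exp2_Dinf d (T : measurableType d) (R : realType)
  (Q' P : probability T R) : \bar R :=
  match pselect (Q' `<< P) with
  | left _ => ess_sup P (Radon_Nikodym (charge_of_finite_measure Q') P)
  | right _ => +oo
  end.

(* Main.v *)
Require Import Defs.
From HB Require Import structures.
From mathcomp Require Import all_boot all_order all_algebra.
From mathcomp Require Import all_classical all_reals all_analysis ess_sup_inf charge.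
From mathcomp Require Import measurable_realfun.
From mathcomp Require Import lra.
Import Order.TTheory GRing.Theory Num.Theory.
Import numFieldNormedType.Exports.
Local Open Scope classical_set_scope.
Local Open Scope ring_scope.
Local Open Scope ereal_scope.
Lemma mset_ge d (T : measurableType d) (R : realType) (r : T -> R)
  (mr : measurable_fun setT r) (s : R) : measurable [set x | (s <= r x)%R].
Proof.
rewrite (_ : [set x | (s <= r x)%R] = r @^-1` `[s, +oo[).
  by move: (mr measurableT _ (measurable_itv `[s, +oo[)); rewrite setTI.
by apply/seteqP; split => x /=; rewrite in_itv/= andbT.
Qed.

Lemma mset_gt d (T : measurableType d) (R : realType) (r : T -> R)
  (mr : measurable_fun setT r) (s : R) : measurable [set x | (s < r x)%R].
Proof.
rewrite (_ : [set x | (s < r x)%R] = r @^-1` `]s, +oo[).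
  by move: (mr measurableT _ (measurable_itv `]s, +oo[)); rewrite setTI.
by apply/seteqP; split => x /=; rewrite in_itv/= andbT.
Qed.

Lemma mwP d (T : measurableType d) (R : realType) (P : probability T R)
  (r : T -> R) (mr : measurable_fun setT r) (D : set R) :
  measurable D -> measurable_fun D (wP P r).
Proof.
move=> mD.
apply: (eq_measurable_fun (EFin \o (fun s => fine (wP P r s)))).
  by move=> s _ /=; rewrite fineK // fin_num_measure //; exact: mset_ge.
apply/measurable_EFinP; apply: nonincreasing_measurable => // s t st.
rewrite fine_le ?fin_num_measure //; try exact: mset_ge.
apply: le_measure; rewrite ?inE; try exact: mset_ge.
by move=> x /=; apply: le_trans.
Qed.

Lemma cut_bound d (T : measurableType d) (R : realType) (P : probability T R)
  (r : T -> R) (mr : measurable_fun setT r) (m : R) (m0 : (0 <= m)%R) :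
  \int[P]_x ((Num.min (Num.max (r x) 0%R) m)%:E) <= WP P r m.
Proof.
pose Yf := fun x => Num.min (Num.max (r x) 0%R) m.
have mY : measurable_fun setT Yf by apply: measurable_minr => //; apply: measurable_maxr.
pose Y : {RV P >-> R} := mfun_Sub (mem_set mY : Yf \in mfun).
have YE x : Y x = Yf x by [].
have Y0 x : (0 <= Y x)%R.
  by rewrite YE /Yf le_min m0 le_max lexx orbT.
rewrite (_ : \int[P]_x _ = 'E_P[Y]); last by rewrite expectation_def.
rewrite ge0_expectation_ccdf // /WP integral_mkcond [X in _ <= X]integral_mkcond.
apply: ge0_le_integral => //.
- by move=> s _; apply: erestrict_ge0 => ? _; exact: measure_ge0.
- have := measurable_restrictT (ccdf Y) (measurable_itv `[0%R, +oo[).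
  move=> /iffLR; apply; exact: (measurable_funTS (ccdf_measurable Y)).
- have := measurable_restrictT (wP P r) (measurable_itv `[0%R, m]).
  by move=> /iffLR; apply; exact: mwP.
move=> s _; rewrite !patchE.
have p0 : (point : \bar R) = 0 by [].
rewrite p0.
case: ifPn => s0; last by case: ifPn => // _; exact: measure_ge0.
move/set_mem: s0; rewrite /= in_itv /= andbT => s0.

rewrite /ccdf /distribution /pushforward /=.
case: ifPn => [sm|].
  apply: le_measure; rewrite ?inE.
  - by move: (mY measurableT _ (measurable_itv `]s, +oo[)); rewrite setTI.
  - exact: mset_ge.
  move=> x /=; rewrite in_itv /= andbT /Yf lt_min lt_max => /andP[/orP[]] //.
    by move=> /ltW.
  by move=> /(le_lt_trans s0); rewrite ltxx.
move=> sm; have ms : (m < s)%R.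
  rewrite ltNge; apply: contra sm => sm'.
  by apply/mem_set; rewrite /= in_itv /= s0 sm'.
rewrite (_ : _ @^-1` _ = set0) ?measure0 //.
apply/seteqP; split => x //=; rewrite in_itv /= andbT /Yf lt_min => /andP[_].
by move=> /(lt_trans ms); rewrite ltxx.
Qed.
Lemma wP_gt0 d (T : measurableType d) (R : realType) (P : probability T R)
  (r : T -> R) (mr : measurable_fun setT r) (c h : R) :
  (c < h)%R -> h%:E <= ess_norm P r -> 0 < wP P r c.
Proof.
move=> ch hr; rewrite lt0e measure_ge0 andbT; apply/eqP => w0.
have : ess_norm P r <= c%:E.
  apply/ess_supP; exists [set x | (c <= r x)%R]; split => //.
    exact: mset_ge.
  move=> x /= /negP; rewrite lee_fin -ltNge => /ltW //.
move=> /(le_trans hr); rewrite lee_fin leNgt ch //.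
Qed.

Lemma WP_lt d (T : measurableType d) (R : realType) (P : probability T R)
  (r : T -> R) (mr : measurable_fun setT r) (m h : R) :
  (0 <= m)%R -> (m < h)%R -> h%:E <= ess_norm P r -> WP P r h < +oo ->
  WP P r m < WP P r h.
Proof.
move=> m0 mh hr Whoo.
have mw := @mwP _ _ _ P r mr.
have e : `[0%R, h]%classic = `[0%R, m]%classic `|` `]m, h]%classic :> set R.
  rewrite -itv_bndbnd_setU //; rewrite bnd_simp //; exact: ltW.
have disj : [disjoint `[0%R, m]%classic & `]m, h]%classic].
  apply/disj_setPS => x [/=]; rewrite !in_itv /= => /andP[_ xm] /andP[mx _].
  by move: (le_lt_trans xm mx); rewrite ltxx.
have sp : WP P r h = \int[lebesgue_measure]_(x in `[0%R, m]) wP P r x +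
   \int[lebesgue_measure]_(x in `]m, h]) wP P r x.
  rewrite /WP e; apply: ge0_integral_setU => //.
  by apply: mw; exact: measurableU.
have I0fin : \int[lebesgue_measure]_(x in `[0%R, m]) wP P r x \is a fin_num.
  rewrite ge0_fin_numE; last by apply: integral_ge0 => x _; exact: measure_ge0.
  apply: le_lt_trans Whoo; rewrite sp.
  by apply: leeDl; apply: integral_ge0 => x _; exact: measure_ge0.
rewrite sp {1}/WP.
rewrite lteDl //.
pose c := ((m + h) / 2)%R.
have [mc ch] := midf_lt mh.
apply: (@lt_le_trans _ _ (\int[lebesgue_measure]_(x in `]m, c]) wP P r x)).
  apply: (@lt_le_trans _ _ (\int[lebesgue_measure]_(x in `]m, c]) (cst (wP P r c)) x)).
    rewrite integral_cst // /= lebesgue_measure_itv /= lte_fin mc -EFinD.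
    apply: mule_gt0; first exact: (@wP_gt0 _ _ _ P r mr c h ch hr).
    by rewrite lte_fin subr_gt0.
  apply: ge0_le_integral => //.
  - exact: mw.
  move=> x /=; rewrite in_itv /= => /andP[_ xc].
  apply: le_measure; rewrite ?inE; try exact: mset_ge.
  by move=> y /=; apply: le_trans.
apply: ge0_subset_integral => //.
- exact: mw.
apply: subset_itvl; rewrite bnd_simp; exact: ltW.
Qed.
Theorem lemma1 (d : measure_display) (T : measurableType d) (R : realType)
  (P Q : probability T R) (r : T -> R)
  (r_meas : measurable_fun setT r)
  (r_density : forall A, measurable A -> Q A = \int[P]_(x in A) (r x)%:E)
  (eps : R) (eps_gt0 : (0 < eps)%R) (eps_le1 : (eps <= 1)%R)
  (Q' : probability T R) (hTV : DTV Q' Q <= eps%:E)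
  (h : R) (h_ge0 : (0 <= h)%R) (h_le : h%:E <= ess_norm P r)
  (h_inv : SP P r h = eps%:E) :
  h%:E <= exp2_Dinf Q' P.
Proof.
rewrite /exp2_Dinf; case: pselect => [QP|_]; last by rewrite leey.
set f := Radon_Nikodym _ _.
rewrite leNgt; apply/negP => fh.
have [m [fm mh]] : exists m : R, ess_sup P f < m%:E /\ (m < h)%R.
  move: fh; case: (ess_sup P f) => [x| |] //.
  - rewrite lte_fin => xh; exists ((x + h) / 2)%R.
    by have [a b] := midf_lt xh; rewrite lte_fin.
  - move=> _; exists (h - 1)%R; split; first exact: ltNyr.
    lra.
have [N [mN PN0 subN]] : \forall x \ae P, f x <= m%:E.
  by apply/ess_supP; exact: ltW.
have PAN A : measurable A -> P (A `&` N) = 0.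
  move=> mA; apply/eqP; rewrite eq_le measure_ge0 andbT -PN0.
  by apply: le_measure; rewrite ?inE //; exact: measurableI.
have Q'N A : measurable A -> Q' (A `&` N) = 0.
  move=> mA; have mAN : measurable (A `&` N) by exact: measurableI.
  apply: (QP (A `&` N)) => //.
  move=> B mB BAN; apply/eqP; rewrite eq_le measure_ge0 andbT -(PAN A mA).
  by apply: le_measure; rewrite ?inE.
have intf : P.-integrable setT f := @Radon_Nikodym_integrable _ _ _ (charge_of_finite_measure Q') P QP.
have Q'le A : measurable A -> Q' A <= m%:E * P A.
  move=> mA.
  have -> : Q' A = Q' (A `\` N).
    by rewrite (measureDI Q' mA mN) -[RHS]adde0; congr (_ + _); exact: Q'N.
  have -> : P A = P (A `\` N).
    by rewrite (measureDI P mA mN) -[RHS]adde0; congr (_ + _); exact: PAN.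
  have mAN : measurable (A `\` N) by exact: measurableD.
  have -> : Q' (A `\` N) = \int[P]_(x in A `\` N) f x.
    by rewrite -(@Radon_Nikodym_integral _ _ _ (charge_of_finite_measure Q') P _ QP mAN).
  rewrite -integral_cst //.
  apply: le_integral.
  - exact: mAN.
  - exact: (integrableS measurableT mAN (subsetT _) intf).
  - exact: finite_measure_integrable_cst.
  move=> x; rewrite inE => -[Ax Nx] /=.
  case: (boolP (f x <= m%:E)) => // /negP H; exfalso; exact: Nx (subN x H).
have m1 : (1 <= m)%R.
  by have := Q'le setT measurableT; rewrite !probability_setT mule1 lee_fin.
have m0 : (0 <= m)%R by lra.
have mpre (i : interval R) : measurable (r @^-1` [set` i]).
  by move: (r_meas measurableT _ (measurable_itv i)); rewrite setTI.
pose B := r @^-1` `]m, +oo[.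
have mB : measurable B := mpre _.
have fQ A : measurable A -> Q A \is a fin_num by move=> mA; exact: fin_num_measure.
have fQ' A : measurable A -> Q' A \is a fin_num by move=> mA; exact: fin_num_measure.
have fP A : measurable A -> P A \is a fin_num by move=> mA; exact: fin_num_measure.
have hB : Q B <= eps%:E + m%:E * P B.
  have hT : `|Q' B - Q B| <= eps%:E.
    by apply: le_trans hTV; apply: ereal_sup_ubound; exists B.
  move: hT (Q'le B mB).
  rewrite -(fineK (fQ B mB)) -(fineK (fQ' B mB)) -(fineK (fP B mB)).
  rewrite -EFinB abse_EFin -EFinM -EFinD !lee_fin => /ler_normlP [h1 h2] h3.
  lra.
pose C := r @^-1` `[0%R, m].
have mC : measurable C := mpre _.
pose Ng := r @^-1` `]-oo, 0%R[.
have mNg : measurable Ng := mpre _.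
pose Yf := fun x => Num.min (Num.max (r x) 0%R) m.
have mYf : measurable_fun setT (fun x => (Yf x)%:E).
  by apply/measurable_EFinP; apply: measurable_minr => //; apply: measurable_maxr.
have Yf0 x : (0 <= Yf x)%R by rewrite /Yf le_min m0 le_max lexx orbT.
have e1 : Q B + (Q C + Q Ng) = 1.
  rewrite -measureU //; last first.
    apply/seteqP; split => x //= []; rewrite /C /Ng /= !in_itv /= => /andP[a b] c.
    lra.
  rewrite -measureU //; last first.
    apply/seteqP; split => x //= []; rewrite /B /C /Ng /= !in_itv /= andbT => a [/andP[b c]|b].
    lra. lra.
    exact: measurableU.
  rewrite -[RHS](probability_setT Q); congr (Q _).
  apply/seteqP; split => x // _; rewrite /B /C /Ng /= !in_itv /= andbT.
  case: (ltP m (r x)) => xm; [by left | right].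
  case: (ltP (r x) 0%R) => x0; [by right | left].
  by [].

have e2 : Q Ng <= 0.
  rewrite r_density //.
  rewrite (eq_integral (fun x => - ((- r x)%:E))); last first.
    by move=> x _; rewrite EFinN oppeK.
  rewrite integral_ge0N; last first.
    move=> x; rewrite /Ng /= in_itv /= => x0; rewrite lee_fin; lra.
  rewrite oppe_le0; apply: integral_ge0.
  move=> x; rewrite /Ng /= in_itv /= => x0; rewrite lee_fin; lra.
have e3 : Q C = \int[P]_(x in C) (Yf x)%:E.
  rewrite r_density //; apply: eq_integral => x; rewrite inE /C /= in_itv /=.
  move=> /andP[a b]; congr EFin; rewrite /Yf max_l // min_l //.
have e4 : \int[P]_(x in C) (Yf x)%:E + m%:E * P B <= WP P r m.
  have -> : m%:E * P B = \int[P]_(x in B) (Yf x)%:E.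
    rewrite -integral_cst //; apply: eq_integral => x; rewrite inE /B /= in_itv /=.
    rewrite andbT => a; congr EFin; rewrite /Yf max_l; last lra.
    rewrite min_r //; lra.
  rewrite -ge0_integral_setU //; last first.
    apply/disj_setPS => x [/=]; rewrite /B /C /= !in_itv /= andbT => /andP[a b] c.
    lra.
    by move=> x _; rewrite lee_fin.
    by apply: measurable_funTS.
  apply: le_trans (@cut_bound _ _ _ P r r_meas m m0).
  apply: ge0_subset_integral => //.
    exact: measurableU.
  by move=> x _; rewrite lee_fin.
have Whfin : WP P r h \is a fin_num.
  by move: h_inv; rewrite /SP; case: (WP P r h).
have e5 : WP P r m < WP P r h.
  apply: (@WP_lt _ _ _ P r r_meas m h m0 mh h_le).
  by rewrite ltey_eq Whfin.
have W0 : 0 <= WP P r m by apply: integral_ge0 => x _; exact: measure_ge0.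
have Wmfin : WP P r m \is a fin_num.
  by rewrite ge0_fin_numE //; apply: (lt_trans e5); rewrite ltey_eq Whfin.
move: e1 e2 e3 e4 e5 hB h_inv W0.
rewrite /SP.
rewrite -(fineK (fQ B mB)) -(fineK (fQ C mC)) -(fineK (fQ Ng mNg)) -(fineK (fP B mB)).
rewrite -(fineK Wmfin) -(fineK Whfin) => + + <-.
rewrite -EFinM; set mp := (m * _)%R.
rewrite -!EFinD !lee_fin !lte_fin => e1 e2 e4 e5 hB e6 W0.
have {}e1 : (fine (Q B) + (fine (Q C) + fine (Q Ng)) = 1)%R by apply: EFin_inj.
have {}e6 : (1 - fine (WP P r h) = eps)%R by apply: EFin_inj; rewrite EFinB.
lra.
Qed.
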